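(* Let $x,y,z\in[0,1]$ satisfy $2y=x+z$. Suppose that \[(1-\{x\})^2+(1-\{z\})^2-2(1-\{y\})^2<2\left(\frac{z-x}{2}\right)^2.\] Then $\min(x,z)<1/2\le y$.
   Context: For $x\in[0,1]$, $\{x\}:=x$ if $x<1/2$ and $\{x\}:=x-1/2$ if $x\ge 1/2$ (this is not the usual fractional part). *)

(* Defs.v *)
From Stdlib Require Import Reals Lra.
Open Scope R_scope.

Definition frac2 (x : R) : R := if Rlt_dec x (1/2) then x else x - 1/2.

(* Main.v *)
Require Import Defs.
From Stdlib Require Import Reals Lra Psatz.
Open Scope R_scope.

Theorem lemma4p2 (x y z : R)
  (hx : 0 <= x <= 1) (hy : 0 <= y <= 1) (hz : 0 <= z <= 1)
  (hxyz : 2 * y = x + z)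
  (h : (1 - frac2 x) ^ 2 + (1 - frac2 z) ^ 2 - 2 * (1 - frac2 y) ^ 2
       < 2 * ((z - x) / 2) ^ 2) :
  Rmin x z < 1/2 <= y.
Proof.
  unfold frac2 in h.
  destruct (Rlt_dec x (1/2)); destruct (Rlt_dec z (1/2)); destruct (Rlt_dec y (1/2));
  unfold Rmin; destruct (Rle_dec x z); split; nra.
Qed.
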